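(* Let $a,b,k,l$ be pairwise distinct complex parameters and $J,J'$ commuting constant $N\times N$ matrices. Let $H_{xy}$ ($x\neq y$) be $N\times N$ matrix functions of variables $\xi^J_k,\xi^{J'}_l$ satisfying $$\partial^J_kH_{xy}=\frac{J}{k-x}H_{xy}-H_{xy}\frac{J}{k-y}+H_{xk}JH_{ky},\qquad \partial^{J'}_lH_{xy}=\frac{J'}{l-x}H_{xy}-H_{xy}\frac{J'}{l-y}+H_{xl}J'H_{ly}$$ for all relevant pairwise distinct labels. Then the system is multidimensionally consistent: computing $\partial^{J'}_l\partial^J_kH_{ab}$ and $\partial^J_k\partial^{J'}_lH_{ab}$ by differentiating the right-hand sides and substituting the system for all first derivatives yields identical expressions.
   Context: $\partial^J_k$ denotes $\partial/\partial\xi^J_k$, where $\xi^J_k$ is a Miwa-type variable labelled by the complex parameter $k$ and the constant matrix $J$. *)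

(* Defs.v *)
From HB Require Import structures.
From mathcomp Require Import all_boot all_order all_algebra.
From mathcomp Require Import complex.
From mathcomp Require Import reals.
Set Implicit Arguments. Unset Strict Implicit. Unset Printing Implicit Defensive.
Import Order.TTheory GRing.Theory Num.Theory.
Local Open Scope ring_scope.

Inductive lab := La | Lb | Lk | Ll.

Section Flows.
Variables (R : realType) (N : nat).
Local Notation C := (R[i]).
Variable (p : lab -> C).

Definition flow (J : 'M[C]_N) (z : lab) (H : lab -> lab -> 'M[C]_N)
    (x y : lab) : 'M[C]_N :=
  (p z - p x)^-1 *: (J *m H x y) - (p z - p y)^-1 *: (H x y *m J)
  + H x z *m J *m H z y.

(* d^{Jw}_w d^{Jz}_z H_xy, computed by differentiating the RHS of the z-flow
   (Leibniz rule; J, Jz, Jw and the parameters are constant) and substituting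
   the w-flow for every first derivative. *)
Definition second (Jz : 'M[C]_N) (z : lab) (Jw : 'M[C]_N) (w : lab)
    (H : lab -> lab -> 'M[C]_N) (x y : lab) : 'M[C]_N :=
  (p z - p x)^-1 *: (Jz *m flow Jw w H x y)
  - (p z - p y)^-1 *: (flow Jw w H x y *m Jz)
  + flow Jw w H x z *m Jz *m H z y
  + H x z *m Jz *m flow Jw w H z y.
End Flows.

(* Main.v *)
Require Import Defs.
From HB Require Import structures.
From mathcomp Require Import all_boot all_order all_algebra.
From mathcomp Require Import complex.
From mathcomp Require Import reals.
Import Order.TTheory GRing.Theory Num.Theory.
Local Open Scope ring_scope.

Lemma acl (V : zmodType) (A B C D E F G X I K L Y : V) :
 A - B + C - (D - E + F) + (G - X + I) + (X - K + L) =
 A - D + G - (B - E + K) + (C - Y + L) + (Y - F + I).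
Proof.
rewrite !opprD !opprK !addrA.
rewrite [LHS](@GRing.add V).[ACl (1*2*3*4*5*6*7*9*11*12*8*10)] subrK.
rewrite [RHS](@GRing.add V).[ACl (1*4*7*2*5*11*3*12*6*9*8*10)] subrK //.
Qed.

Section Key.
Variables (F : comRingType) (N : nat) (J J' Hab Hal Hlb Hak Hkb Hlk Hkl : 'M[F]_N)
  (ka kb kl la lb lk : F).
Hypothesis hJ : J *m J' = J' *m J.
Lemma key :
  ka *: (J *m (la *: (J' *m Hab) - lb *: (Hab *m J') + Hal *m J' *m Hlb))
  - kb *: ((la *: (J' *m Hab) - lb *: (Hab *m J') + Hal *m J' *m Hlb) *m J)
  + (la *: (J' *m Hak) - lk *: (Hak *m J') + Hal *m J' *m Hlk) *m J *m Hkb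
  + Hak *m J *m (lk *: (J' *m Hkb) - lb *: (Hkb *m J') + Hkl *m J' *m Hlb)
  =
  la *: (J' *m (ka *: (J *m Hab) - kb *: (Hab *m J) + Hak *m J *m Hkb))
  - lb *: ((ka *: (J *m Hab) - kb *: (Hab *m J) + Hak *m J *m Hkb) *m J')
  + (ka *: (J *m Hal) - kl *: (Hal *m J) + Hak *m J *m Hkl) *m J' *m Hlb
  + Hal *m J' *m (kl *: (J *m Hlb) - kb *: (Hlb *m J) + Hlk *m J *m Hkb).
Proof.
rewrite ?mulmxDl ?mulmxDr ?mulmxBl ?mulmxBr ?scalerDr ?scalerBr
  ?mulmxN ?mulNmx ?scalerN -?scalemxAl -?scalemxAr ?scalerA ?mulmxA ?hJ.
rewrite -[Hak *m J *m J']mulmxA -[Hab *m J *m J']mulmxA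
  -[Hal *m J *m J']mulmxA hJ !mulmxA.
rewrite [la * _]mulrC [lb * _]mulrC [la * _]mulrC [lb * _]mulrC.
exact: acl.
Qed.
End Key.

Theorem mainTheorem11 (R : realType) (N : nat) (p : lab -> R[i])
    (J J' : 'M[R[i]]_N) (H : lab -> lab -> 'M[R[i]]_N) :
  injective p ->
  J *m J' = J' *m J ->
  second p J Lk J' Ll H La Lb = second p J' Ll J Lk H La Lb.
Proof.
move=> _ hJ; rewrite /second /flow.
exact: key.
Qed.
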